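(* Let $n\ge5$, $1\le m\le n-1$ with $2m\neq n$, $a>0$, and let $\Gamma^{m,n}$ be the closed discrete curve $p_k=a(\cos(2\pi mk/n),\sin(2\pi mk/n))$, $k=0,\dots,n-1$, with $l_0:=|p_{k+1}-p_k|=2a|\sin(m\pi/n)|$. Let $(A,B)\in\mathbb{R}^2$ and $\psi_k=A\cos(2\pi k/n)+B\sin(2\pi k/n)$. Then $\sum_k\psi_k=0$, and for every $C^2$ family $p(t)$ of closed discrete curves with $p(0)=\Gamma^{m,n}$, $\mathrm{Vol}(p(t))$ constant and $p_k'(0)=\psi_kN_k$, \[ \frac{d^2}{dt^2}\Big|_{t=0}L(p(t))=\frac{4}{l_0}\Big[\sin^2\frac{\pi}{n}-\cos\frac{2\pi}{n}\tan^2\frac{m\pi}{n}\Big]\sum_k\psi_k^2 . \] This value is $\ge0$ if $m\in\{1,n-1\}$, and is $<0$ if $2\le m\le n-2$ and $(A,B)\ne(0,0)$.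
   Context: A closed discrete curve is an $n$-tuple $(p_0,\dots,p_{n-1})$ of points of $\mathbb{R}^2$, indices modulo $n$, with $l_k:=|p_{k+1}-p_k|\ne0$ for all $k$. $R_\varphi$ denotes rotation of $\mathbb{R}^2$ by $\varphi$. Fix $R\in\{R_{\pi/2},R_{-\pi/2}\}$ and set $\sigma=+1$ if $R=R_{\pi/2}$, $\sigma=-1$ if $R=R_{-\pi/2}$. Edge normal $\nu_k:=R((p_{k+1}-p_k)/l_k)$. The signed angle $\theta_k\in(-\pi,\pi]$ at vertex $p_k$ is defined by $\nu_k=R_{\sigma\theta_k}\nu_{k-1}$. When $\theta_k\ne\pi$, the vertex normal is $N_k:=\dfrac{\nu_k+\nu_{k-1}}{1+\cos\theta_k}$. Length $L=\sum_k l_k$, area $\mathrm{Vol}=\frac12\sum_k\langle p_k,\nu_k\rangle l_k$. *)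

(* Defs.v *)
From Stdlib Require Import Reals Lra Lia.
From Coquelicot Require Import Coquelicot.
Open Scope R_scope.

Definition vsub (u v : R * R) : R * R := (fst u - fst v, snd u - snd v).
Definition vadd (u v : R * R) : R * R := (fst u + fst v, snd u + snd v).
Definition vscale (c : R) (u : R * R) : R * R := (c * fst u, c * snd u).
Definition dot (u v : R * R) : R := fst u * fst v + snd u * snd v.
Definition vnorm (u : R * R) : R := sqrt (dot u u).

Fixpoint sumR (n : nat) (f : nat -> R) : R :=
  match n with O => 0 | S n' => sumR n' f + f n' end.

(* A discrete curve with n points is p : nat -> R*R, read with indices mod n. *)
Definition pt (n : nat) (p : nat -> R * R) (k : nat) : R * R := p (k mod n).

Definition edge_len (n : nat) (p : nat -> R * R) (k : nat) : R :=
  vnorm (vsub (pt n p (S k)) (pt n p k)).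

Definition closed_curve (n : nat) (p : nat -> R * R) : Prop :=
  (0 < n)%nat /\ forall k, (k < n)%nat -> edge_len n p k <> 0.

(* R = R_{sigma pi/2}, sigma in {1,-1}: (x,y) |-> (-sigma y, sigma x) *)
Definition rotq (sigma : R) (u : R * R) : R * R := (- sigma * snd u, sigma * fst u).

Definition edge_normal (sigma : R) (n : nat) (p : nat -> R * R) (k : nat) : R * R :=
  rotq sigma (vscale (/ edge_len n p k) (vsub (pt n p (S k)) (pt n p k))).

(* cos theta_k, where nu_k = R_{sigma theta_k} nu_{k-1}; since nu_k, nu_{k-1}
   are unit vectors, cos theta_k = <nu_k, nu_{k-1}>. *)
Definition cos_angle (sigma : R) (n : nat) (p : nat -> R * R) (k : nat) : R :=
  dot (edge_normal sigma n p k) (edge_normal sigma n p (k + n - 1)).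

Definition vertex_normal (sigma : R) (n : nat) (p : nat -> R * R) (k : nat) : R * R :=
  vscale (/ (1 + cos_angle sigma n p k))
    (vadd (edge_normal sigma n p k) (edge_normal sigma n p (k + n - 1))).

Definition Len (n : nat) (p : nat -> R * R) : R := sumR n (edge_len n p).

Definition Vol (sigma : R) (n : nat) (p : nat -> R * R) : R :=
  / 2 * sumR n (fun k => dot (pt n p k) (edge_normal sigma n p k) * edge_len n p k).

Definition C2_on (eps : R) (f : R -> R) : Prop :=
  forall t, - eps < t < eps ->
    ex_derive f t /\ ex_derive (Derive f) t /\ continuous (Derive (Derive f)) t.

Definition Gamma (n m : nat) (a : R) (k : nat) : R * R :=
  (a * cos (2 * PI * INR m * INR k / INR n), a * sin (2 * PI * INR m * INR k / INR n)).

(* Main.v *)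
Require Import Defs.
From Stdlib Require Import Reals Lra Lia Psatz.
From Coquelicot Require Import Coquelicot.
From Stdlib Require Import FunctionalExtensionality.
Open Scope R_scope.

Lemma sumR_ext n f g : (forall k, (k < n)%nat -> f k = g k) -> sumR n f = sumR n g.
Proof. induction n; simpl; intros H; [reflexivity|]. rewrite IHn by (intros; apply H; lia). rewrite H by lia; reflexivity. Qed.
Lemma sumR_plus n f g : sumR n (fun k => f k + g k) = sumR n f + sumR n g.
Proof. induction n; simpl; [lra|]. rewrite IHn; lra. Qed.
Lemma sumR_minus n f g : sumR n (fun k => f k - g k) = sumR n f - sumR n g.
Proof. induction n; simpl; [lra|]. rewrite IHn; lra. Qed.
Lemma sumR_scal n c f : sumR n (fun k => c * f k) = c * sumR n f.
Proof. induction n; simpl; [lra|]. rewrite IHn; lra. Qed.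
Lemma sumR_tele n (F : nat -> R) : sumR n (fun k => F (S k) - F k) = F n - F O.
Proof. induction n; simpl; [lra|]. rewrite IHn; lra. Qed.
Lemma sumR_shift n (F : nat -> R) : F n = F O -> sumR n (fun k => F (S k)) = sumR n F.
Proof. intros H. assert (E := sumR_tele n F). rewrite sumR_minus in E. lra. Qed.
Lemma sumR_nonneg n f : (forall k, (k < n)%nat -> 0 <= f k) -> 0 <= sumR n f.
Proof. induction n; simpl; intros H; [lra|]. assert (0 <= f n) by (apply H; lia).
 assert (0 <= sumR n f) by (apply IHn; intros; apply H; lia). lra. Qed.
Lemma sumR_ge_term n f j : (j < n)%nat -> (forall k, (k < n)%nat -> 0 <= f k) -> f j <= sumR n f.
Proof. induction n; simpl; intros Hj H; [lia|].
 assert (0 <= sumR n f) by (apply sumR_nonneg; intros; apply H; lia).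
 assert (0 <= f n) by (apply H; lia).
 destruct (Nat.eq_dec j n) as [->|Hne]; [lra|].
 assert (f j <= sumR n f) by (apply IHn; [lia| intros; apply H; lia]). lra. Qed.

Lemma sumR_lin3 n f c d1 d2 g1 g2 : sumR n (fun k => f k + c * (d1 * g1 k + d2 * g2 k)) = sumR n f + c * (d1 * sumR n g1 + d2 * sumR n g2).
Proof. induction n; simpl; [ring|]. rewrite IHn; ring. Qed.

Lemma sumR_ratio n f g h L L3 : sumR n (fun k => (f k + g k) / L - h k / L3) = (sumR n f + sumR n g) / L - sumR n h / L3.
Proof. induction n; simpl; [unfold Rdiv; ring|]. rewrite IHn; unfold Rdiv; ring. Qed.
Lemma sumR_quad n f1 f2 f3 al be ga : sumR n (fun k => al * f1 k + be * f2 k + ga * f3 k) = al * sumR n f1 + be * sumR n f2 + ga * sumR n f3.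
Proof. induction n; simpl; [ring|]. rewrite IHn; ring. Qed.

Lemma d_plus f g x df dg : is_derive f x df -> is_derive g x dg -> is_derive (fun t => f t + g t) x (df + dg).
Proof. intros; now apply (is_derive_plus f g). Qed.
Lemma d_minus f g x df dg : is_derive f x df -> is_derive g x dg -> is_derive (fun t => f t - g t) x (df - dg).
Proof. intros; now apply (is_derive_minus f g). Qed.
Lemma d_mult f g x df dg : is_derive f x df -> is_derive g x dg -> is_derive (fun t => f t * g t) x (df * g x + f x * dg).
Proof. intros; apply (is_derive_mult f g); auto. intros; apply Rmult_comm. Qed.
Lemma d_sum n (F : nat -> R -> R) (D : nat -> R) x :
  (forall k, (k < n)%nat -> is_derive (F k) x (D k)) -> is_derive (fun t => sumR n (fun k => F k t)) x (sumR n D).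
Proof. induction n; simpl; intros H.
 - apply (@is_derive_const R_AbsRing R_NormedModule 0 x).
 - apply d_plus; [apply IHn; intros; apply H; lia | apply H; lia]. Qed.
Lemma d_ext (f g : R -> R) (x l l' : R) : (forall t, f t = g t) -> l = l' -> is_derive f x l -> is_derive g x l'.
Proof. intros H -> Hd. apply (is_derive_ext f g); auto. Qed.

Lemma sum_cos_zero n j w : sin (w/2) <> 0 -> INR n * w = 2 * INR j * PI ->
  sumR n (fun k => cos (INR k * w)) = 0.
Proof.
  intros Hs Hn.
  set (F := fun k : nat => sin (INR k * w - w/2)).
  assert (E : sumR n (fun k => F (S k) - F k) = 2 * sin (w/2) * sumR n (fun k => cos (INR k * w))).
  { rewrite <- sumR_scal. apply sumR_ext. intros k _. unfold F. rewrite S_INR.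
    replace ((INR k + 1) * w - w/2) with (INR k * w + w/2) by lra.
    rewrite sin_plus, sin_minus. ring. }
  rewrite sumR_tele in E. unfold F in E. simpl INR in E.
  replace (INR n * w - w/2) with (- (w/2) + 2 * INR j * PI) in E by lra.
  rewrite sin_period in E. replace (0 * w - w/2) with (-(w/2)) in E by lra.
  assert (2 * sin (w/2) * sumR n (fun k => cos (INR k * w)) = 0) by lra.
  apply Rmult_integral in H. destruct H; [|auto]. exfalso; lra.
Qed.

Lemma sum_sin_zero n j w : sin (w/2) <> 0 -> INR n * w = 2 * INR j * PI ->
  sumR n (fun k => sin (INR k * w)) = 0.
Proof.
  intros Hs Hn.
  set (F := fun k : nat => cos (INR k * w - w/2)).
  assert (E : sumR n (fun k => F (S k) - F k) = - (2 * sin (w/2)) * sumR n (fun k => sin (INR k * w))).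
  { rewrite <- sumR_scal. apply sumR_ext. intros k _. unfold F. rewrite S_INR.
    replace ((INR k + 1) * w - w/2) with (INR k * w + w/2) by lra.
    rewrite cos_plus, cos_minus. ring. }
  rewrite sumR_tele in E. unfold F in E. simpl INR in E.
  replace (INR n * w - w/2) with (- (w/2) + 2 * INR j * PI) in E by lra.
  rewrite cos_period in E. replace (0 * w - w/2) with (-(w/2)) in E by lra.
  assert (- (2 * sin (w/2)) * sumR n (fun k => sin (INR k * w)) = 0) by lra.
  apply Rmult_integral in H. destruct H; [|auto]. exfalso; lra.
Qed.

Lemma ang_mod n m k : (0 < n)%nat ->
  exists q : nat, 2 * PI * INR m * INR k / INR n = 2 * PI * INR m * INR (k mod n) / INR n + 2 * INR q * PI.
Proof.
  intros Hn. exists (m * (k / n))%nat.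
  assert (Hk : k = (n * (k / n) + k mod n)%nat) by (apply Nat.div_mod; lia).
  assert (INR n <> 0) by (apply not_0_INR; lia).
  rewrite Hk at 1. rewrite plus_INR, !mult_INR. field. auto.
Qed.

Lemma cos_mod n m k : (0 < n)%nat ->
  cos (2 * PI * INR m * INR (k mod n) / INR n) = cos (2 * PI * INR m * INR k / INR n).
Proof. intros Hn. destruct (ang_mod n m k Hn) as [q ->]. now rewrite cos_period. Qed.
Lemma sin_mod n m k : (0 < n)%nat ->
  sin (2 * PI * INR m * INR (k mod n) / INR n) = sin (2 * PI * INR m * INR k / INR n).
Proof. intros Hn. destruct (ang_mod n m k Hn) as [q ->]. now rewrite sin_period. Qed.

Lemma Gamma_mod n m a k : (0 < n)%nat -> Gamma n m a (k mod n) = Gamma n m a k.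
Proof. intros Hn. unfold Gamma. now rewrite cos_mod, sin_mod. Qed.

Lemma cos_mod1 n k : (0 < n)%nat -> cos (2 * PI * INR (k mod n) / INR n) = cos (2 * PI * INR k / INR n).
Proof. intros Hn. pose proof (cos_mod n 1 k Hn) as H. change (INR 1) with 1 in H.
  replace (2 * PI * INR (k mod n) / INR n) with (2 * PI * 1 * INR (k mod n) / INR n).
  rewrite H. replace (2 * PI * 1 * INR k / INR n) with (2 * PI * INR k / INR n) by (unfold Rdiv; ring). reflexivity. unfold Rdiv; ring. Qed.
Lemma sin_mod1 n k : (0 < n)%nat -> sin (2 * PI * INR (k mod n) / INR n) = sin (2 * PI * INR k / INR n).
Proof. intros Hn. pose proof (sin_mod n 1 k Hn) as H. change (INR 1) with 1 in H.
  replace (2 * PI * INR (k mod n) / INR n) with (2 * PI * 1 * INR (k mod n) / INR n).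
  rewrite H. replace (2 * PI * 1 * INR k / INR n) with (2 * PI * INR k / INR n) by (unfold Rdiv; ring). reflexivity. unfold Rdiv; ring. Qed.

Section Psi.
Variables (n : nat) (A B : R).
Hypothesis Hn : (3 <= n)%nat.
Let psi := fun k : nat => A * cos (2 * PI * INR k / INR n) + B * sin (2 * PI * INR k / INR n).

Lemma INRn_pos : 0 < INR n.
Proof. apply lt_0_INR; lia. Qed.

Lemma sinPIn : 0 < sin (PI / INR n).
Proof. pose proof INRn_pos. pose proof PI_RGT_0. apply sin_gt_0.
  apply Rdiv_lt_0_compat; lra.
  assert (1 < INR n) by (apply lt_1_INR; lia).
  apply Rmult_lt_reg_r with (INR n); [lra|]. unfold Rdiv. rewrite Rmult_assoc, Rinv_l by lra. nra. Qed.

Lemma sin2PIn : 0 < sin (2 * PI / INR n).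
Proof. pose proof INRn_pos. pose proof PI_RGT_0. apply sin_gt_0.
  apply Rdiv_lt_0_compat; lra.
  assert (3 <= INR n) by (replace 3 with (INR 3) by (simpl; lra); apply le_INR; lia).
  apply Rmult_lt_reg_r with (INR n); [lra|]. unfold Rdiv. rewrite Rmult_assoc, Rinv_l by lra. nra. Qed.

Lemma psi_sum : sumR n psi = 0.
Proof.
  pose proof INRn_pos. pose proof sinPIn.
  unfold psi. rewrite sumR_plus, !sumR_scal.
  assert (E1 : sumR n (fun k => cos (2 * PI * INR k / INR n)) = 0).
  { rewrite <- (sum_cos_zero n 1 (2 * PI / INR n)).
    - apply sumR_ext; intros; f_equal; field; lra.
    - replace (2 * PI / INR n / 2) with (PI / INR n) by (field; lra). lra.
    - simpl; field; lra. }
  assert (E2 : sumR n (fun k => sin (2 * PI * INR k / INR n)) = 0).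
  { rewrite <- (sum_sin_zero n 1 (2 * PI / INR n)).
    - apply sumR_ext; intros; f_equal; field; lra.
    - replace (2 * PI / INR n / 2) with (PI / INR n) by (field; lra). lra.
    - simpl; field; lra. }
  rewrite E1, E2. ring.
Qed.

Lemma psi_per : psi n = psi O.
Proof. pose proof INRn_pos. unfold psi. simpl INR.
  replace (2 * PI * INR n / INR n) with (0 + 2 * INR 1 * PI) by (simpl; field; lra).
  rewrite cos_period, sin_period. replace (2*PI*0/INR n) with 0 by (field; lra). reflexivity. Qed.

Lemma psi_mod k : psi (k mod n) = psi k.
Proof. unfold psi. rewrite cos_mod1, sin_mod1 by lia. reflexivity. Qed.

Lemma psi_prod : sumR n (fun k => psi k * psi (S k)) = cos (2 * PI / INR n) * sumR n (fun k => psi k ^ 2).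
Proof.
  pose proof INRn_pos. pose proof sin2PIn. set (w := 2 * PI / INR n).
  assert (E1 : sumR n (fun k => cos (INR k * (2 * w))) = 0).
  { apply (sum_cos_zero n 2). replace (2 * w / 2) with w by field. unfold w; lra.
    unfold w; simpl; field; lra. }
  assert (E2 : sumR n (fun k => sin (INR k * (2 * w))) = 0).
  { apply (sum_sin_zero n 2). replace (2 * w / 2) with w by field. unfold w; lra.
    unfold w; simpl; field; lra. }
  rewrite <- sumR_scal.
  transitivity (sumR n (fun k => cos w * psi k ^ 2 + sin w * ((B*B - A*A)/2 * sin (INR k * (2 * w)) + A * B * cos (INR k * (2*w))))).
  - apply sumR_ext; intros k _. unfold psi. rewrite S_INR.
    replace (2 * PI * (INR k + 1) / INR n) with (INR k * w + w) by (unfold w; field; lra).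
    replace (2 * PI * INR k / INR n) with (INR k * w) by (unfold w; field; lra).
    replace (INR k * (2 * w)) with (INR k * w + INR k * w) by ring.
    rewrite cos_plus, sin_plus, cos_plus, sin_plus. field.
  - rewrite (sumR_lin3 n (fun k => cos w * psi k ^ 2) (sin w) ((B * B - A * A) / 2) (A * B)
      (fun k => sin (INR k * (2 * w))) (fun k => cos (INR k * (2 * w)))), E1, E2. ring.
Qed.

Lemma psi_sq_pos : (A, B) <> (0, 0) -> 0 < sumR n (fun k => psi k ^ 2).
Proof.
  intros HAB. pose proof INRn_pos. pose proof sin2PIn.
  destruct (Req_dec A 0) as [HA|HA].
  - assert (HB : B <> 0) by (intro; apply HAB; subst; reflexivity).
    assert (psi 1 ^ 2 <= sumR n (fun k => psi k ^ 2)) by (apply (sumR_ge_term n (fun k => psi k ^ 2) 1); [lia| intros; apply pow2_ge_0]).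
    assert (psi 1 <> 0). { unfold psi. rewrite HA. simpl INR. replace (2*PI*1/INR n) with (2*PI/INR n) by (field; lra).
      intro Hc. assert (B * sin (2 * PI / INR n) = 0) by lra. apply Rmult_integral in H2. destruct H2; lra. }
    assert (0 < psi 1 ^ 2) by (apply pow2_gt_0 ; auto). lra.
  - assert (psi 0 ^ 2 <= sumR n (fun k => psi k ^ 2)) by (apply (sumR_ge_term n (fun k => psi k ^ 2) 0); [lia| intros; apply pow2_ge_0]).
    assert (psi 0 = A). { unfold psi. simpl INR. replace (2*PI*0/INR n) with 0 by (field; lra). rewrite cos_0, sin_0. ring. }
    assert (0 < psi 0 ^ 2) by (rewrite H2; apply pow2_gt_0; auto). lra.
Qed.
End Psi.

Lemma pyth u : cos u * cos u + sin u * sin u = 1.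
Proof. pose proof (sin2_cos2 u). unfold Rsqr in H. lra. Qed.

Lemma edge_sq a ca sa C S : ca*ca+sa*sa=1 -> C*C+S*S=1 ->
  (a*(ca*C - sa*S) - a*ca)*(a*(ca*C - sa*S) - a*ca) + (a*(sa*C + ca*S) - a*sa)*(a*(sa*C + ca*S) - a*sa) = a*a*(2 - 2*C).
Proof. intros H1 H2.
  transitivity (a*a*(ca*ca+sa*sa)*((C-1)*(C-1)+S*S)); [ring|].
  rewrite H1. replace (S*S) with (1 - C*C) by lra. ring. Qed.

Lemma dot_prev ca sa C S : ca*ca+sa*sa=1 -> C*C+S*S=1 ->
  ((sa*C + ca*S) - sa)*(sa - (sa*C - ca*S)) + ((ca*C - sa*S) - ca)*(ca - (ca*C + sa*S)) = 2*C - 2*C*C.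
Proof. intros H1 H2.
  transitivity ((ca*ca+sa*sa)*(S*S) - (ca*ca+sa*sa)*((1-C)*(1-C))); [ring|].
  rewrite H1. replace (S*S) with (1 - C*C) by lra. ring. Qed.

Section Geo.
Variables (n m : nat) (a sigma : R).
Hypotheses (Hn : (5 <= n)%nat) (Hm : (1 <= m <= n - 1)%nat) (H2m : (2 * m <> n)%nat) (Ha : 0 < a)
  (Hsig : sigma * sigma = 1).

Definition xx := INR m * PI / INR n.
Definition hh := 2 * PI * INR m / INR n.
Definition al (k : nat) := 2 * PI * INR m * INR k / INR n.
Definition l0v := 2 * a * Rabs (sin xx).

Lemma nposR : 0 < INR n.
Proof. apply lt_0_INR; lia. Qed.

Lemma hh_xx : hh = 2 * xx.
Proof. pose proof nposR. unfold hh, xx. field. lra. Qed.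

Lemma al_S k : al (S k) = al k + hh.
Proof. pose proof nposR. unfold al, hh. rewrite S_INR. field. lra. Qed.

Lemma al_n k : al (k + n) = al k + 2 * INR m * PI.
Proof. pose proof nposR. unfold al. rewrite plus_INR. field. lra. Qed.

Lemma xx_range : 0 < xx < PI.
Proof. pose proof nposR. pose proof PI_RGT_0. unfold xx.
  assert (1 <= INR m) by (replace 1 with (INR 1) by reflexivity; apply le_INR; lia).
  assert (INR m < INR n) by (apply lt_INR; lia).
  split. apply Rdiv_lt_0_compat; nra.
  apply Rmult_lt_reg_r with (INR n); [lra|]. unfold Rdiv. rewrite Rmult_assoc, Rinv_l by lra. nra. Qed.

Lemma sxx_nz : sin xx <> 0.
Proof. pose proof xx_range. pose proof (sin_gt_0 xx). lra. Qed.

Lemma cxx_nz : cos xx <> 0.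
Proof. pose proof xx_range. pose proof nposR. pose proof PI_RGT_0.
  assert (xx <> PI / 2).
  { unfold xx. intro E. assert (INR (2*m) = INR n).
    { rewrite mult_INR. change (INR 2) with 2.
      assert (E2: INR m * PI = PI / 2 * INR n) by (rewrite <- E; field; lra).
      assert (PI * (2 * INR m - INR n) = 0) by lra.
      apply Rmult_integral in H2. destruct H2; lra. }
    apply INR_eq in H2. lia. }
  destruct (Rlt_or_le xx (PI/2)).
  - assert (0 < cos xx) by (apply cos_gt_0; lra). lra.
  - assert (cos xx < 0) by (apply cos_lt_0; lra). lra. Qed.

Lemma l0_pos : 0 < l0v.
Proof. unfold l0v. pose proof sxx_nz. pose proof (Rabs_pos_lt _ H). nra. Qed.

Lemma l0_sq : l0v * l0v = a * a * (2 - 2 * cos hh).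
Proof. unfold l0v. rewrite hh_xx, cos_2a_sin.
  replace (2 * a * Rabs (sin xx) * (2 * a * Rabs (sin xx))) with (4*a*a*(Rabs (sin xx) * Rabs (sin xx))) by ring.
  rewrite <- Rabs_mult, Rabs_right by (apply Rle_ge; nra). ring. Qed.

Lemma Chh_ne1 : 1 + cos hh <> 0.
Proof. rewrite hh_xx, cos_2a_cos. pose proof cxx_nz. nra. Qed.

Lemma Shh_nz : sin hh <> 0.
Proof. rewrite hh_xx, sin_2a. pose proof cxx_nz. pose proof sxx_nz.
  intro E. assert (sin xx * cos xx = 0) by lra. apply Rmult_integral in H1. tauto. Qed.

Lemma Gamma_pt q k : (forall j, (j < n)%nat -> q j = Gamma n m a j) -> pt n q k = Gamma n m a k.
Proof. intros Hq. unfold pt. rewrite Hq by (apply Nat.mod_upper_bound; lia). apply Gamma_mod; lia. Qed.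

Lemma Gamma_al k : Gamma n m a k = (a * cos (al k), a * sin (al k)).
Proof. reflexivity. Qed.

Lemma edge_len_G q k : (forall j, (j < n)%nat -> q j = Gamma n m a j) -> edge_len n q k = l0v.
Proof.
  intros Hq. unfold edge_len, vnorm, dot, vsub. rewrite !Gamma_pt by auto. rewrite !Gamma_al. simpl.
  rewrite al_S, cos_plus, sin_plus.
  rewrite edge_sq by apply pyth. rewrite <- l0_sq.
  apply sqrt_square. pose proof l0_pos; lra.
Qed.

Lemma Chh_ne1' : 2 - 2 * cos hh <> 0.
Proof. rewrite hh_xx, cos_2a_sin. pose proof sxx_nz. nra. Qed.

Lemma en_k q k : (forall j, (j < n)%nat -> q j = Gamma n m a j) ->
  edge_normal sigma n q k = (- sigma * (/ l0v * (a * sin (al k + hh) - a * sin (al k))),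
                             sigma * (/ l0v * (a * cos (al k + hh) - a * cos (al k)))).
Proof. intros Hq. unfold edge_normal, rotq, vscale, vsub. rewrite edge_len_G by auto.
  rewrite !Gamma_pt by auto. rewrite !Gamma_al, al_S. reflexivity. Qed.

Lemma en_prev q k : (forall j, (j < n)%nat -> q j = Gamma n m a j) ->
  edge_normal sigma n q (k + n - 1) = (- sigma * (/ l0v * (a * sin (al k) - a * sin (al k - hh))),
                             sigma * (/ l0v * (a * cos (al k) - a * cos (al k - hh)))).
Proof. intros Hq. unfold edge_normal, rotq, vscale, vsub. rewrite edge_len_G by auto.
  rewrite !Gamma_pt by auto. rewrite !Gamma_al.
  replace (S (k + n - 1)) with (k + n)%nat by lia.
  assert (E : al (k + n - 1) = al k - hh + 2 * INR m * PI).
  { pose proof (al_S (k + n - 1)) as E1. replace (S (k + n - 1)) with (k + n)%nat in E1 by lia.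
    rewrite al_n in E1. lra. }
  rewrite E, al_n, cos_period, sin_period, cos_period, sin_period. reflexivity. Qed.

Lemma cos_angle_G q k : (forall j, (j < n)%nat -> q j = Gamma n m a j) ->
  cos_angle sigma n q k = cos hh.
Proof. intros Hq. pose proof l0_pos. pose proof Chh_ne1'. unfold cos_angle, dot.
  rewrite en_k, en_prev by auto. simpl.
  rewrite sin_plus, cos_plus, sin_minus, cos_minus.
  set (ca := cos (al k)). set (sa := sin (al k)). set (C := cos hh). set (S := sin hh).
  transitivity (sigma * sigma * (a * a) * (((sa*C + ca*S) - sa)*(sa - (sa*C - ca*S)) + ((ca*C - sa*S) - ca)*(ca - (ca*C + sa*S))) / (l0v * l0v)).
  { field. lra. }
  rewrite dot_prev by (unfold ca, sa, C, S; apply pyth).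
  rewrite Hsig, l0_sq. unfold C. field. split; lra. Qed.

Definition cN := - 2 * sigma * sin hh / (l0v * (1 + cos hh)).

Lemma vn_G q k : (forall j, (j < n)%nat -> q j = Gamma n m a j) ->
  vertex_normal sigma n q k = (cN * (a * cos (al k)), cN * (a * sin (al k))).
Proof. intros Hq. pose proof l0_pos. pose proof Chh_ne1. unfold vertex_normal, vscale, vadd.
  rewrite cos_angle_G by auto. rewrite en_k, en_prev by auto. simpl.
  rewrite sin_plus, cos_plus, sin_minus, cos_minus. unfold cN.
  f_equal; field; split; lra. Qed.
End Geo.

Lemma d_sqrt_sum (u v : R -> R) t du dv : is_derive u t du -> is_derive v t dv ->
  0 < u t * u t + v t * v t ->
  is_derive (fun t => sqrt (u t * u t + v t * v t)) t ((u t * du + v t * dv) / sqrt (u t * u t + v t * v t)).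
Proof. intros Hu Hv Hq.
  pose proof (d_plus _ _ t _ _ (d_mult u u t du du Hu Hu) (d_mult v v t dv dv Hv Hv)) as H.
  pose proof (is_derive_sqrt _ t _ H Hq) as H2. simpl in H2.
  assert (0 < sqrt (u t * u t + v t * v t)) by (apply sqrt_lt_R0; auto).
  eapply d_ext; [| | exact H2]. { intros; reflexivity. } field. lra. Qed.

Lemma d_term (u v U V : R -> R) t du dv ddu ddv : is_derive u t du -> is_derive v t dv ->
  is_derive U t ddu -> is_derive V t ddv -> U t = du -> V t = dv ->
  0 < u t * u t + v t * v t ->
  is_derive (fun t => (u t * U t + v t * V t) / sqrt (u t * u t + v t * v t)) t
    ((du * du + dv * dv + u t * ddu + v t * ddv) / sqrt (u t * u t + v t * v t)
     - (u t * du + v t * dv) ^ 2 / (sqrt (u t * u t + v t * v t)) ^ 3).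
Proof. intros Hu Hv HU HV EU EV Hq.
  assert (0 < sqrt (u t * u t + v t * v t)) by (apply sqrt_lt_R0; auto).
  pose proof (d_plus _ _ t _ _ (d_mult u U t du ddu Hu HU) (d_mult v V t dv ddv Hv HV)) as H1.
  pose proof (d_sqrt_sum u v t du dv Hu Hv Hq) as H2.
  pose proof (is_derive_div _ _ t _ _ H1 H2 (Rgt_not_eq _ _ H)) as H3.
  eapply d_ext; [| | exact H3]. { intros; reflexivity. } cbv beta. rewrite EU, EV. field. lra. Qed.

Lemma ball_int (eps y : R) : 0 < eps -> ball 0 eps y -> - eps < y < eps.
Proof. intros He Hy. unfold ball in Hy; simpl in Hy. unfold AbsRing_ball, abs, minus, plus, opp in Hy; simpl in Hy.
  rewrite Ropp_0, Rplus_0_r in Hy. apply Rabs_def2 in Hy. lra. Qed.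

Lemma loc_int (eps t : R) : - eps < t < eps -> locally t (fun s => - eps < s < eps).
Proof. intros Ht. assert (Hp : 0 < Rmin (eps - t) (t + eps)) by (apply Rmin_pos; lra).
  exists (mkposreal _ Hp). intros y Hy. unfold ball in Hy; simpl in Hy.
  unfold AbsRing_ball, abs, minus, plus, opp in Hy; simpl in Hy. apply Rabs_def2 in Hy.
  pose proof (Rmin_l (eps - t) (t + eps)). pose proof (Rmin_r (eps - t) (t + eps)). lra. Qed.

Definition psiF (n : nat) (A B : R) (k : nat) := A * cos (2 * PI * INR k / INR n) + B * sin (2 * PI * INR k / INR n).

Section Anal.
Variables (n m : nat) (a sigma A B eps : R) (p : R -> nat -> R * R).
Hypotheses (Hn : (5 <= n)%nat) (Hm : (1 <= m <= n - 1)%nat) (H2m : (2 * m <> n)%nat) (Ha : 0 < a)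
  (Hsig : sigma * sigma = 1) (Heps : 0 < eps)
  (HC2 : forall k, (k < n)%nat -> C2_on eps (fun t => fst (p t k)) /\ C2_on eps (fun t => snd (p t k)))
  (Hcl : forall t, - eps < t < eps -> closed_curve n (p t))
  (HV : forall t, - eps < t < eps -> Vol sigma n (p t) = Vol sigma n (p 0))
  (H0 : forall k, (k < n)%nat -> p 0 k = Gamma n m a k)
  (Hd : forall k, (k < n)%nat ->
        is_derive (fun t => fst (p t k)) 0 (psiF n A B k * fst (vertex_normal sigma n (p 0) k)) /\
        is_derive (fun t => snd (p t k)) 0 (psiF n A B k * snd (vertex_normal sigma n (p 0) k))).

Definition X k t := fst (p t (k mod n)).
Definition Y k t := snd (p t (k mod n)).
Definition DX k t := Derive (X k) t.
Definition DY k t := Derive (Y k) t.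
Definition DDX k := Derive (DX k) 0.
Definition DDY k := Derive (DY k) 0.

Lemma modlt k : (k mod n < n)%nat.
Proof. apply Nat.mod_upper_bound; lia. Qed.

Lemma X_der k t : - eps < t < eps -> is_derive (X k) t (DX k t).
Proof. intros Ht. destruct (HC2 _ (modlt k)) as [H1 _]. destruct (H1 t Ht) as [H2 _]. now apply Derive_correct. Qed.
Lemma Y_der k t : - eps < t < eps -> is_derive (Y k) t (DY k t).
Proof. intros Ht. destruct (HC2 _ (modlt k)) as [_ H1]. destruct (H1 t Ht) as [H2 _]. now apply Derive_correct. Qed.
Lemma DX_der k : is_derive (DX k) 0 (DDX k).
Proof. assert (Ht : - eps < 0 < eps) by lra. destruct (HC2 _ (modlt k)) as [H1 _]. destruct (H1 0 Ht) as [_ [H2 _]]. now apply Derive_correct. Qed.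
Lemma DY_der k : is_derive (DY k) 0 (DDY k).
Proof. assert (Ht : - eps < 0 < eps) by lra. destruct (HC2 _ (modlt k)) as [_ H1]. destruct (H1 0 Ht) as [_ [H2 _]]. now apply Derive_correct. Qed.

Lemma X0 k : X k 0 = a * cos (al n m k).
Proof. unfold X. rewrite H0 by apply modlt. rewrite Gamma_mod by lia. reflexivity. Qed.
Lemma Y0 k : Y k 0 = a * sin (al n m k).
Proof. unfold Y. rewrite H0 by apply modlt. rewrite Gamma_mod by lia. reflexivity. Qed.

Lemma psiF_mod k : psiF n A B (k mod n) = psiF n A B k.
Proof. unfold psiF. rewrite cos_mod1, sin_mod1 by lia. reflexivity. Qed.

Lemma DX0 k : DX k 0 = cN n m a sigma * psiF n A B k * (a * cos (al n m k)).
Proof. destruct (Hd _ (modlt k)) as [H1 _]. apply is_derive_unique in H1.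
  assert (E : DX k 0 = psiF n A B (k mod n) * fst (vertex_normal sigma n (p 0) (k mod n))) by (unfold DX, X; exact H1).
  rewrite E.
  rewrite vn_G with (n := n) (m := m) (a := a) by auto. simpl. rewrite psiF_mod. unfold al. rewrite cos_mod by lia. ring. Qed.
Lemma DY0 k : DY k 0 = cN n m a sigma * psiF n A B k * (a * sin (al n m k)).
Proof. destruct (Hd _ (modlt k)) as [_ H1]. apply is_derive_unique in H1.
  assert (E : DY k 0 = psiF n A B (k mod n) * snd (vertex_normal sigma n (p 0) (k mod n))) by (unfold DY, Y; exact H1).
  rewrite E.
  rewrite vn_G with (n := n) (m := m) (a := a) by auto. simpl. rewrite psiF_mod. unfold al. rewrite sin_mod by lia. ring. Qed.

Definition qq k t := (X (S k) t - X k t) * (X (S k) t - X k t) + (Y (S k) t - Y k t) * (Y (S k) t - Y k t).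

Lemma Len_eq t : Len n (p t) = sumR n (fun k => sqrt (qq k t)).
Proof. reflexivity. Qed.

Lemma qq_pos k t : - eps < t < eps -> (k < n)%nat -> 0 < qq k t.
Proof. intros Ht Hk. destruct (Hcl t Ht) as [_ Hne]. specialize (Hne k Hk).
  assert (E : edge_len n (p t) k = sqrt (qq k t)) by reflexivity. rewrite E in Hne.
  assert (0 <= qq k t) by (unfold qq; apply Rplus_le_le_0_compat; apply Rle_0_sqr).
  destruct H; auto. rewrite <- H in Hne. rewrite sqrt_0 in Hne. lra. Qed.

Definition L1 t := sumR n (fun k => ((X (S k) t - X k t) * (DX (S k) t - DX k t) + (Y (S k) t - Y k t) * (DY (S k) t - DY k t)) / sqrt (qq k t)).

Lemma LA t : - eps < t < eps -> is_derive (fun t => Len n (p t)) t (L1 t).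
Proof. intros Ht.
  apply (is_derive_ext (fun t => sumR n (fun k => sqrt (qq k t)))); [intros; symmetry; apply Len_eq|].
  apply d_sum. intros k Hk. unfold qq.
  apply (d_sqrt_sum (fun t => X (S k) t - X k t) (fun t => Y (S k) t - Y k t)).
  - apply d_minus; apply X_der; auto.
  - apply d_minus; apply Y_der; auto.
  - apply (qq_pos k t Ht Hk). Qed.

Definition val1 := sumR n (fun k =>
  ((DX (S k) 0 - DX k 0) * (DX (S k) 0 - DX k 0) + (DY (S k) 0 - DY k 0) * (DY (S k) 0 - DY k 0)
   + (X (S k) 0 - X k 0) * (DDX (S k) - DDX k) + (Y (S k) 0 - Y k 0) * (DDY (S k) - DDY k)) / sqrt (qq k 0)
  - ((X (S k) 0 - X k 0) * (DX (S k) 0 - DX k 0) + (Y (S k) 0 - Y k 0) * (DY (S k) 0 - DY k 0)) ^ 2 / sqrt (qq k 0) ^ 3).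

Lemma LB : is_derive L1 0 val1.
Proof. assert (Ht : - eps < 0 < eps) by lra. unfold L1, val1. apply d_sum. intros k Hk. unfold qq.
  apply (d_term (fun t => X (S k) t - X k t) (fun t => Y (S k) t - Y k t)
                (fun t => DX (S k) t - DX k t) (fun t => DY (S k) t - DY k t)).
  - apply d_minus; apply X_der; auto.
  - apply d_minus; apply Y_der; auto.
  - apply d_minus; apply DX_der.
  - apply d_minus; apply DY_der.
  - reflexivity.
  - reflexivity.
  - apply (qq_pos k 0 Ht Hk). Qed.

Lemma L2 : is_derive_n (fun t => Len n (p t)) 2 0 val1.
Proof. simpl. apply (is_derive_ext_loc L1).
  - exists (mkposreal eps Heps). intros y Hy. apply ball_int in Hy; auto.
    symmetry. apply is_derive_unique. apply LA; auto.
  - apply LB. Qed.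

Definition W t := / 2 * sumR n (fun k => sigma * (Y k t * X (S k) t - X k t * Y (S k) t)).

Lemma Vol_eq t : - eps < t < eps -> Vol sigma n (p t) = W t.
Proof. intros Ht. destruct (Hcl t Ht) as [_ Hne]. unfold Vol, W. f_equal. apply sumR_ext. intros k Hk.
  specialize (Hne k Hk). unfold edge_normal, dot, rotq, vscale, vsub, pt. unfold X, Y. simpl.
  field. auto. Qed.

Definition W1 t := / 2 * sumR n (fun k => sigma * ((DY k t * X (S k) t + Y k t * DX (S k) t) - (DX k t * Y (S k) t + X k t * DY (S k) t))).

Lemma W_der t : - eps < t < eps -> is_derive W t (W1 t).
Proof. intros Ht. unfold W, W1. apply is_derive_scal. apply d_sum. intros k Hk.
  apply is_derive_scal. apply d_minus; apply d_mult; (apply X_der || apply Y_der); auto. Qed.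

Lemma W1_zero t : - eps < t < eps -> W1 t = 0.
Proof. intros Ht. assert (H1 := W_der t Ht). apply is_derive_unique in H1. rewrite <- H1.
  apply is_derive_unique. apply (is_derive_ext_loc (fun _ => W 0)).
  - generalize (loc_int eps t Ht). apply filter_imp. intros s Hs.
    rewrite <- !Vol_eq by (auto; lra). symmetry. apply HV; auto.
  - apply (@is_derive_const R_AbsRing R_NormedModule). Qed.

Definition W2 := / 2 * sumR n (fun k => sigma * ((DDY k * X (S k) 0 + DY k 0 * DX (S k) 0 + (DY k 0 * DX (S k) 0 + Y k 0 * DDX (S k)))
   - (DDX k * Y (S k) 0 + DX k 0 * DY (S k) 0 + (DX k 0 * DY (S k) 0 + X k 0 * DDY (S k))))).

Lemma W2_zero : W2 = 0.
Proof. assert (Ht : - eps < 0 < eps) by lra.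
  assert (H1 : is_derive W1 0 W2).
  { unfold W1, W2. apply is_derive_scal. apply d_sum. intros k Hk. apply is_derive_scal.
    apply d_minus; apply d_plus; apply d_mult.
    + apply DY_der. + apply X_der; auto. + apply Y_der; auto. + apply DX_der.
    + apply DX_der. + apply Y_der; auto. + apply X_der; auto. + apply DY_der. }
  apply is_derive_unique in H1. rewrite <- H1. apply is_derive_unique.
  apply (is_derive_ext_loc (fun _ => 0)).
  - exists (mkposreal eps Heps). intros y Hy. apply ball_int in Hy; auto. symmetry. apply W1_zero; auto.
  - apply (@is_derive_const R_AbsRing R_NormedModule). Qed.

Definition gx k := a * cos (al n m k).
Definition gy k := a * sin (al n m k).
Let C := cos (hh n m).
Let Sh := sin (hh n m).

Lemma F1 k : gx k * gx k + gy k * gy k = a * a.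
Proof. unfold gx, gy. transitivity (a * a * (cos (al n m k) * cos (al n m k) + sin (al n m k) * sin (al n m k))); [ring|]. rewrite pyth; ring. Qed.
Lemma F2 k : gx k * gx (S k) + gy k * gy (S k) = a * a * C.
Proof. unfold gx, gy, C. rewrite (al_S n m Hn Hm H2m), cos_plus, sin_plus.
  transitivity (a * a * cos (hh n m) * (cos (al n m k) * cos (al n m k) + sin (al n m k) * sin (al n m k))); [ring|]. rewrite pyth; ring. Qed.
Lemma F3 k : gy k * gx (S k) - gx k * gy (S k) = - (a * a * Sh).
Proof. unfold gx, gy, Sh. rewrite (al_S n m Hn Hm H2m), cos_plus, sin_plus.
  transitivity (- (a * a * sin (hh n m) * (cos (al n m k) * cos (al n m k) + sin (al n m k) * sin (al n m k)))); [ring|]. rewrite pyth; ring. Qed.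

Lemma X_n t : X n t = X 0 t.
Proof. unfold X. rewrite Nat.Div0.mod_same, Nat.Div0.mod_0_l by lia. reflexivity. Qed.
Lemma Y_n t : Y n t = Y 0 t.
Proof. unfold Y. rewrite Nat.Div0.mod_same, Nat.Div0.mod_0_l by lia. reflexivity. Qed.
Lemma DDX_n : DDX n = DDX 0.
Proof. unfold DDX, DX. assert (E : X n = X 0) by (apply functional_extensionality; apply X_n). rewrite E. reflexivity. Qed.
Lemma DDY_n : DDY n = DDY 0.
Proof. unfold DDY, DY. assert (E : Y n = Y 0) by (apply functional_extensionality; apply Y_n). rewrite E. reflexivity. Qed.

Definition Kp := - (1 - C) / Sh.

Definition V2 k := DDY k * gx (S k) + gy k * DDX (S k) - DDX k * gy (S k) - gx k * DDY (S k).
Definition TT k := (gx (S k) - gx k) * (DDX (S k) - DDX k) + (gy (S k) - gy k) * (DDY (S k) - DDY k).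

Lemma TT_sum : sumR n TT = Kp * sumR n V2.
Proof.
  pose proof (Shh_nz n m Hn Hm H2m) as HS.
  set (gxm := fun j => a * cos (al n m j - hh n m)).
  set (gym := fun j => a * sin (al n m j - hh n m)).
  set (g := fun j => (gx j - gxm j) * DDX j + (gy j - gym j) * DDY j - Kp * (gym j * DDX j - gxm j * DDY j)).
  set (f := fun k => - (gx (S k) - gx k) * DDX k - (gy (S k) - gy k) * DDY k - Kp * (DDY k * gx (S k) - DDX k * gy (S k))).
  assert (E1 : sumR n (fun k => TT k - Kp * V2 k) = sumR n (fun k => f k + g (S k))).
  { apply sumR_ext. intros k _. unfold g, f, gxm, gym, TT, V2. rewrite (al_S n m Hn Hm H2m).
    replace (al n m k + hh n m - hh n m) with (al n m k) by ring. fold (gx k) (gy k). ring. }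
  assert (E2 : g n = g O).
  { unfold g, gxm, gym, gx, gy. rewrite DDX_n, DDY_n.
    assert (Ea : al n m n = al n m 0 + 2 * INR m * PI) by (rewrite <- (al_n n m Hn Hm H2m); reflexivity).
    rewrite !Ea.
    replace (al n m 0 + 2 * INR m * PI - hh n m) with (al n m 0 - hh n m + 2 * INR m * PI) by ring.
    rewrite !cos_period, !sin_period. reflexivity. }
  assert (E3 : forall k, f k + g k = 0).
  { intros k. unfold f, g, gxm, gym, gx, gy, Kp, C, Sh. rewrite (al_S n m Hn Hm H2m), cos_plus, sin_plus, cos_minus, sin_minus.
    field. auto. }
  rewrite sumR_plus, sumR_shift in E1 by auto. rewrite <- sumR_plus in E1.
  rewrite (sumR_ext n (fun k => f k + g k) (fun _ => 0)) in E1 by (intros; apply E3).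
  assert (E4 : sumR n (fun _ : nat => 0) = 0) by (clear; induction n; simpl; lra).
  rewrite E4, sumR_minus, sumR_scal in E1. lra.
Qed.

Definition Zk k := DY k 0 * DX (S k) 0 - DX k 0 * DY (S k) 0.

Lemma V2_sum : sumR n V2 = -2 * sumR n Zk.
Proof.
  pose proof W2_zero as HW. unfold W2 in HW.
  rewrite (sumR_ext n _ (fun k => sigma * (V2 k + 2 * Zk k))) in HW.
  2:{ intros k _. unfold V2, Zk. rewrite !X0, !Y0. unfold gx, gy. ring. }
  rewrite sumR_scal, sumR_plus, sumR_scal in HW.
  assert (sigma <> 0) by (intro; subst; lra).
  assert (sigma * (sumR n V2 + 2 * sumR n Zk) = 0) by lra.
  apply Rmult_integral in H1. destruct H1; [contradiction|]. lra.
Qed.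

Let c := cN n m a sigma.
Let ps := psiF n A B.

Lemma DX0' k : DX k 0 = c * ps k * gx k.
Proof. exact (DX0 k). Qed.
Lemma DY0' k : DY k 0 = c * ps k * gy k.
Proof. exact (DY0 k). Qed.

Lemma Zk_eq k : Zk k = c * c * (- (a * a * Sh)) * (ps k * ps (S k)).
Proof. unfold Zk. rewrite !DX0', !DY0'.
  transitivity (c * c * (ps k * ps (S k)) * (gy k * gx (S k) - gx k * gy (S k))); [ring|].
  rewrite F3. ring. Qed.

Definition Phi k := (DX (S k) 0 - DX k 0) * (DX (S k) 0 - DX k 0) + (DY (S k) 0 - DY k 0) * (DY (S k) 0 - DY k 0).
Definition Uk k := (X (S k) 0 - X k 0) * (DX (S k) 0 - DX k 0) + (Y (S k) 0 - Y k 0) * (DY (S k) 0 - DY k 0).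

Lemma Phi_eq k : Phi k = c * c * (a * a) * (ps k ^ 2) + c * c * (a * a) * (ps (S k) ^ 2) + (- 2 * c * c * (a * a) * C) * (ps k * ps (S k)).
Proof. unfold Phi. rewrite !DX0', !DY0'.
  transitivity (c * c * (ps (S k) ^ 2 * (gx (S k) * gx (S k) + gy (S k) * gy (S k)) + ps k ^ 2 * (gx k * gx k + gy k * gy k)
     - 2 * ps k * ps (S k) * (gx k * gx (S k) + gy k * gy (S k)))); [ring|].
  rewrite !F1, F2. ring. Qed.

Lemma Uk_eq k : Uk k = c * (a * a) * (1 - C) * (ps k + ps (S k)).
Proof. unfold Uk. rewrite !DX0', !DY0', !X0, !Y0. fold (gx k) (gx (S k)) (gy k) (gy (S k)).
  transitivity (c * (ps (S k) * (gx (S k) * gx (S k) + gy (S k) * gy (S k)) + ps k * (gx k * gx k + gy k * gy k)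
     - (ps k + ps (S k)) * (gx k * gx (S k) + gy k * gy (S k)))); [ring|].
  rewrite !F1, F2. ring. Qed.

Lemma sqrt_qq0 k : sqrt (qq k 0) = l0v n m a.
Proof. assert (E : edge_len n (p 0) k = sqrt (qq k 0)) by reflexivity. rewrite <- E.
  apply (edge_len_G n m a Hn Hm H2m Ha). auto. Qed.

Lemma val1_eq : val1 = (sumR n Phi + sumR n TT) / l0v n m a - sumR n (fun k => Uk k ^ 2) / l0v n m a ^ 3.
Proof. unfold val1. rewrite (sumR_ext n _ (fun k => (Phi k + TT k) / l0v n m a - Uk k ^ 2 / l0v n m a ^ 3)).
  - apply (sumR_ratio n Phi TT (fun k => Uk k ^ 2)).
  - intros k _. rewrite sqrt_qq0. unfold Phi, TT, Uk. rewrite !X0, !Y0.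
    unfold gx, gy. unfold Rdiv. ring.
Qed.

Lemma val1_final : val1 = 4 / l0v n m a * (sin (PI / INR n) ^ 2 - cos (2 * PI / INR n) * tan (INR m * PI / INR n) ^ 2) * sumR n (fun k => ps k ^ 2).
Proof.
  set (Q := sumR n (fun k => ps k ^ 2)).
  set (g := cos (2 * PI / INR n)).
  set (L := l0v n m a).
  set (s := sin (xx n m)). set (co := cos (xx n m)).
  assert (HL : 0 < L) by (apply (l0_pos n m a Hn Hm H2m Ha)).
  assert (Hs : s <> 0) by (apply (sxx_nz n m Hn Hm H2m)).
  assert (Hco : co <> 0) by (apply (cxx_nz n m Hn Hm H2m)).
  assert (HSh : Sh <> 0) by (apply (Shh_nz n m Hn Hm H2m)).
  assert (HC1 : 2 - 2 * C <> 0) by (apply (Chh_ne1' n m Hn Hm H2m)).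
  assert (HC2' : 1 + C <> 0) by (apply (Chh_ne1 n m Hn Hm H2m)).
  assert (HLL : L * L = a * a * (2 - 2 * C)) by (apply (l0_sq n m a Hn Hm H2m)).
  assert (Hpy : co * co + s * s = 1) by apply pyth.
  assert (HCc : C = 2 * co * co - 1).
  { unfold C. rewrite (hh_xx n m Hn Hm H2m), cos_2a_cos. unfold co. ring. }
  assert (HShc : Sh = 2 * s * co).
  { unfold Sh. rewrite (hh_xx n m Hn Hm H2m), sin_2a. unfold s, co. ring. }
  assert (HQ' : sumR n (fun k => ps (S k) ^ 2) = Q).
  { apply (sumR_shift n (fun k => ps k ^ 2)). unfold ps. 
    assert (E : psiF n A B n = psiF n A B 0) by (apply psi_per; lia). rewrite E. reflexivity. }
  assert (HP : sumR n (fun k => ps k * ps (S k)) = g * Q) by (apply psi_prod; lia).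
  assert (HPhi : sumR n Phi = c * c * (a * a) * Q + c * c * (a * a) * Q + (- 2 * c * c * (a * a) * C) * (g * Q)).
  { rewrite (sumR_ext n Phi _ (fun k _ => Phi_eq k)).
    rewrite (sumR_quad n (fun k => ps k ^ 2) (fun k => ps (S k) ^ 2) (fun k => ps k * ps (S k))). rewrite HQ', HP. reflexivity. }
  set (K2 := (c * (a * a) * (1 - C)) ^ 2).
  assert (HU : sumR n (fun k => Uk k ^ 2) = K2 * Q + K2 * Q + (2 * K2) * (g * Q)).
  { rewrite (sumR_ext n (fun k => Uk k ^ 2) (fun k => K2 * (ps k ^ 2) + K2 * (ps (S k) ^ 2) + (2 * K2) * (ps k * ps (S k)))).
    - rewrite (sumR_quad n (fun k => ps k ^ 2) (fun k => ps (S k) ^ 2) (fun k => ps k * ps (S k))). rewrite HQ', HP. reflexivity.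
    - intros k _. rewrite Uk_eq. unfold K2. ring. }
  assert (HT : sumR n TT = Kp * (-2) * (c * c * (- (a * a * Sh)) * (g * Q))).
  { rewrite TT_sum, V2_sum. rewrite (sumR_ext n Zk _ (fun k _ => Zk_eq k)). rewrite sumR_scal, HP. ring. }
  rewrite val1_eq. fold L. rewrite HPhi, HU, HT.
  assert (Eb : (c * c * (a * a) * Q + c * c * (a * a) * Q + - 2 * c * c * (a * a) * C * (g * Q) +
      Kp * -2 * (c * c * - (a * a * Sh) * (g * Q))) / L - (K2 * Q + K2 * Q + 2 * K2 * (g * Q)) / L ^ 3
      = c * c * (a * a) / L * ((1 + C) - (3 - C) * g) * Q).
  { replace (L ^ 3) with (L * (a * a * (2 - 2 * C))) by (rewrite <- HLL; ring).
    unfold K2, Kp. field. repeat split; try lra. }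
  rewrite Eb.
  assert (Ec : c * c = 1 / (a * a * (co * co))).
  { unfold c, cN. fold C Sh L.
    replace ((- 2 * sigma * Sh / (L * (1 + C))) * (- 2 * sigma * Sh / (L * (1 + C))))
      with (4 * (sigma * sigma) * (Sh * Sh) / ((L * L) * ((1 + C) * (1 + C)))) by (field; split; lra).
    rewrite Hsig, HLL, HShc, HCc.
    replace (2 - 2 * (2 * co * co - 1)) with (4 * (s * s)) by lra.
    field. repeat split; lra. }
  rewrite Ec.
  assert (Hsp : sin (PI / INR n) ^ 2 = (1 - g) / 2).
  { unfold g. replace (2 * PI / INR n) with (2 * (PI / INR n)) by (field; apply not_0_INR; lia).
    rewrite cos_2a_sin. field. }
  assert (Ht : tan (INR m * PI / INR n) ^ 2 = (1 - co * co) / (co * co)).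
  { change (INR m * PI / INR n) with (xx n m). unfold tan. fold s co.
    replace (1 - co * co) with (s * s) by lra. field. auto. }
  rewrite Hsp, Ht, HCc. field. repeat split; lra.
Qed.

End Anal.

Lemma y_facts n : (5 <= n)%nat -> 0 < PI / INR n /\ 2 * (PI / INR n) < PI / 2.
Proof. intros Hn. assert (H5 : 5 <= INR n) by (replace 5 with (INR 5) by (simpl; lra); apply le_INR; lia).
  pose proof PI_RGT_0. split. apply Rdiv_lt_0_compat; lra.
  apply Rmult_lt_reg_r with (INR n); [lra|]. unfold Rdiv. field_simplify; [|lra]. nra. Qed.

Lemma coef_nonneg n m : (5 <= n)%nat -> (m = 1 \/ m = n - 1)%nat ->
  0 <= sin (PI / INR n) ^ 2 - cos (2 * PI / INR n) * tan (INR m * PI / INR n) ^ 2.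
Proof. intros Hn Hm. destruct (y_facts n Hn) as [Hy1 Hy2]. pose proof PI_RGT_0.
  assert (INR n <> 0) by (apply not_0_INR; lia).
  set (y := PI / INR n) in *.
  assert (Hco : 0 < cos y) by (apply cos_gt_0; lra).
  assert (Hg : cos (2 * PI / INR n) = cos y * cos y - sin y * sin y).
  { replace (2 * PI / INR n) with (2 * y) by (unfold y; field; auto). apply cos_2a. }
  assert (Ht : tan (INR m * PI / INR n) ^ 2 = (sin y / cos y) ^ 2).
  { destruct Hm as [-> | ->].
    - replace (INR 1 * PI / INR n) with y by (simpl; unfold y; field; auto). reflexivity.
    - rewrite minus_INR by lia. simpl INR. replace ((INR n - 1) * PI / INR n) with (PI - y) by (unfold y; field; auto).
      unfold tan. rewrite sin_PI_x, Rtrigo_facts.cos_pi_minus. field. lra. }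
  rewrite Hg, Ht.
  replace (sin y ^ 2 - (cos y * cos y - sin y * sin y) * (sin y / cos y) ^ 2) with ((sin y ^ 2) ^ 2 / cos y ^ 2) by (field; lra).
  unfold Rdiv. apply Rmult_le_pos; [apply pow2_ge_0 | left; apply Rinv_0_lt_compat; apply pow_lt; lra].
Qed.

Lemma coef_neg n m : (5 <= n)%nat -> (2 <= m <= n - 2)%nat -> (2 * m <> n)%nat ->
  sin (PI / INR n) ^ 2 - cos (2 * PI / INR n) * tan (INR m * PI / INR n) ^ 2 < 0.
Proof. intros Hn Hm H2m. destruct (y_facts n Hn) as [Hy1 Hy2]. pose proof PI_RGT_0.
  assert (Hnz : INR n <> 0) by (apply not_0_INR; lia).
  assert (Hu0 : cos (xx n m) <> 0) by (apply cxx_nz; lia).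
  change (INR m * PI / INR n) with (xx n m).
  set (y := PI / INR n) in *. set (x := xx n m) in *.
  assert (Hxl : 2 * y <= x).
  { unfold x, xx, y. assert (2 <= INR m) by (replace 2 with (INR 2) by (simpl; lra); apply le_INR; lia).
    assert (0 < INR n) by (apply lt_0_INR; lia).
    unfold Rdiv. rewrite <- Rmult_assoc. apply Rmult_le_compat_r. left; apply Rinv_0_lt_compat; lra. nra. }
  assert (Hxr : x <= PI - 2 * y).
  { unfold x, xx, y. assert (INR m <= INR n - 2).
    { replace 2 with (INR 2) by (simpl; lra). rewrite <- minus_INR by lia. apply le_INR; lia. }
    assert (0 < INR n) by (apply lt_0_INR; lia).
    replace (PI - 2 * (PI / INR n)) with ((INR n - 2) * PI / INR n) by (field; lra).
    unfold Rdiv. apply Rmult_le_compat_r. left; apply Rinv_0_lt_compat; lra. nra. }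
  set (g := cos (2 * PI / INR n)).
  assert (Hg2 : g = cos (2 * y)) by (unfold g, y; f_equal; field; auto).
  assert (Hgpos : 0 < g) by (rewrite Hg2; apply cos_gt_0; lra).
  assert (Hsy : 0 < sin y) by (apply sin_gt_0; lra).
  assert (Hgs : g = 1 - 2 * sin y * sin y) by (rewrite Hg2; apply cos_2a_sin).
  assert (Hg1 : g < 1) by nra.
  set (u := cos x).
  assert (Hu1 : u <= g) by (rewrite Hg2; unfold u; apply cos_decr_1; lra).
  assert (Hu2 : - g <= u).
  { rewrite Hg2. rewrite <- Rtrigo_facts.cos_pi_minus. unfold u. apply cos_decr_1; lra. }
  assert (Huu : u * u <= g * g) by nra.
  assert (Hupos : 0 < u * u) by (apply Rsqr_pos_lt; auto).
  assert (Ht : tan x ^ 2 = (1 - u * u) / (u * u)).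
  { unfold u, tan. pose proof (pyth x). replace (1 - cos x * cos x) with (sin x * sin x) by lra. field. auto. }
  rewrite Ht.
  replace (sin y ^ 2 - g * ((1 - u * u) / (u * u))) with ((sin y * sin y * (u * u) - g * (1 - u * u)) / (u * u)) by (field; auto).
  assert (Hss : sin y * sin y = (1 - g) / 2) by lra. rewrite Hss.
  assert (u * u * (1 + g) <= g * g * (1 + g)) by (apply Rmult_le_compat_r; lra).
  assert (g * g * (1 + g) - 2 * g < 0) by nra.
  assert ((1 - g) / 2 * (u * u) - g * (1 - u * u) < 0) by nra.
  apply (Rmult_lt_reg_r (u * u)); auto. rewrite Rmult_0_l. unfold Rdiv. rewrite Rmult_assoc, Rinv_l by lra. lra.
Qed.

Theorem mainTheorem16 (n m : nat) (a A B sigma : R) :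
  (5 <= n)%nat -> (1 <= m <= n - 1)%nat -> (2 * m <> n)%nat -> 0 < a ->
  (sigma = 1 \/ sigma = -1) ->
  let l0 := 2 * a * Rabs (sin (INR m * PI / INR n)) in
  let psi := fun k : nat => A * cos (2 * PI * INR k / INR n) + B * sin (2 * PI * INR k / INR n) in
  let val := 4 / l0 * (sin (PI / INR n) ^ 2 - cos (2 * PI / INR n) * tan (INR m * PI / INR n) ^ 2)
             * sumR n (fun k => psi k ^ 2) in
  (forall k, (k < n)%nat -> edge_len n (Gamma n m a) k = l0) /\
  sumR n psi = 0 /\
  (forall (p : R -> nat -> R * R) (eps : R), 0 < eps ->
     (forall k, (k < n)%nat ->
        C2_on eps (fun t => fst (p t k)) /\ C2_on eps (fun t => snd (p t k))) ->
     (forall t, - eps < t < eps -> closed_curve n (p t)) ->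
     (forall t, - eps < t < eps -> Vol sigma n (p t) = Vol sigma n (p 0)) ->
     (forall k, (k < n)%nat -> p 0 k = Gamma n m a k) ->
     (forall k, (k < n)%nat ->
        is_derive (fun t => fst (p t k)) 0 (psi k * fst (vertex_normal sigma n (p 0) k)) /\
        is_derive (fun t => snd (p t k)) 0 (psi k * snd (vertex_normal sigma n (p 0) k))) ->
     is_derive_n (fun t => Len n (p t)) 2 0 val) /\
  ((m = 1 \/ m = n - 1)%nat -> 0 <= val) /\
  ((2 <= m <= n - 2)%nat -> (A, B) <> (0, 0) -> val < 0).
Proof.
  intros Hn Hm H2m Ha Hs l0 psi val.
  assert (Hsig : sigma * sigma = 1) by (destruct Hs; subst; lra).
  assert (Hl0 : l0 = l0v n m a) by reflexivity.
  assert (Hl0p : 0 < l0) by (rewrite Hl0; apply (l0_pos n m a Hn Hm H2m Ha)).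
  assert (HQ : 0 <= sumR n (fun k => psi k ^ 2)) by (apply sumR_nonneg; intros; apply pow2_ge_0).
  assert (H4 : 0 < 4 / l0) by (apply Rdiv_lt_0_compat; lra).
  split; [|split; [|split; [|split]]].
  - intros k Hk. rewrite Hl0. apply (edge_len_G n m a Hn Hm H2m Ha). auto.
  - apply (psi_sum n A B). lia.
  - intros p eps Heps HC2 Hcl HV H0 Hd.
    assert (E : val = val1 n p).
    { rewrite (val1_final n m a sigma A B eps p Hn Hm H2m Ha Hsig Heps HC2 Hcl HV H0 Hd). reflexivity. }
    rewrite E. apply (L2 n m eps p Hn Hm H2m Heps HC2 Hcl).
  - intros Hm1. unfold val. pose proof (coef_nonneg n m Hn Hm1).
    apply Rmult_le_pos; [|auto]. apply Rmult_le_pos; lra.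
  - intros Hm2 HAB. unfold val. pose proof (coef_neg n m Hn Hm2 H2m).
    assert (0 < sumR n (fun k => psi k ^ 2)) by (apply (psi_sq_pos n A B); [lia|auto]).
    assert (4 / l0 * (sin (PI / INR n) ^ 2 - cos (2 * PI / INR n) * tan (INR m * PI / INR n) ^ 2) < 0).
    { assert (0 < 4 / l0 * -(sin (PI / INR n) ^ 2 - cos (2 * PI / INR n) * tan (INR m * PI / INR n) ^ 2)) by (apply Rmult_lt_0_compat; lra). lra. }
    assert (0 < -(4 / l0 * (sin (PI / INR n) ^ 2 - cos (2 * PI / INR n) * tan (INR m * PI / INR n) ^ 2)) * sumR n (fun k => psi k ^ 2)) by (apply Rmult_lt_0_compat; lra).
    lra.
Qed.
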